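(* For every $k\ge 1$ and every $g\in G_k$, we have $g^2\in G_k'$.
   Context: $G_k$ is the subgroup of the automorphism group $B_k\cong\wr_{i=1}^kC_2$ of the binary rooted tree of depth $k$ consisting of automorphisms acting by even permutations on the $2^k$ leaves; $G_k\cong\mathrm{Syl}_2(A_{2^k})$. $G_k'$ is its commutator subgroup. *)

(* Defs.v *)
From mathcomp Require Import all_boot all_fingroup all_solvable alt.
Set Implicit Arguments. Unset Strict Implicit. Unset Printing Implicit Defensive.

(* Leaves of the binary rooted tree of depth k: binary words of length k.
   A vertex at level j is a word of length j; the vertices of the tree are the
   prefixes [take j x] of leaves x.  A tree automorphism is determined by its
   (faithful) action on the leaves, and a permutation s of the leaves comes
   from a tree automorphism iff for every level j it preserves the relation
   "having the same ancestor at level j", i.e. take j x = take j y. *)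
Definition leaf (k : nat) := (k.-tuple bool).

Definition Bk (k : nat) : {set {perm leaf k}} :=
  [set s : {perm leaf k} | [forall x : leaf k, forall y : leaf k,
     forall j : 'I_k.+1,
       (take j x == take j y) == (take j (s x) == take j (s y))]].

Local Open Scope group_scope.
Definition Gk (k : nat) : {set {perm leaf k}} := Bk k :&: 'Alt_(leaf k).

(* Main.v *)
Require Import Defs.
From mathcomp Require Import all_boot all_fingroup all_solvable alt.
Set Implicit Arguments. Unset Strict Implicit. Unset Printing Implicit Defensive.
Local Open Scope group_scope.

Lemma sq_mul (gT : finGroupType) (G : {group gT}) x y : x \in G -> y \in G ->
  x ^+ 2 \in [~: G, G] -> y ^+ 2 \in [~: G, G] -> (x * y) ^+ 2 \in [~: G, G].
Proof.
move=> Gx Gy Hx Hy.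
have -> : (x * y) ^+ 2 = x ^+ 2 * y ^+ 2 * [~ y, x] ^ y.
  rewrite /commg /conjg !expgS !expg0 !mulg1 !mulgA !mulgK; by [].
apply: groupM; first exact: groupM Hx Hy.
by rewrite conjRg mem_commg // groupJ.
Qed.

Lemma gen_sq (gT : finGroupType) (G : {group gT}) (A : {set gT}) :
  A \subset G -> {in A, forall x, x ^+ 2 \in [~: G, G]} ->
  {in <<A>>, forall x, x ^+ 2 \in [~: G, G]}.
Proof.
move=> sAG HA.
pose S := [set x in G | x ^+ 2 \in [~: G, G]].
have gS : group_set S.
  apply/group_setP; split; first by rewrite inE group1 expg1n group1.
  move=> x y; rewrite !inE => /andP[Gx Hx] /andP[Gy Hy].
  by rewrite groupM // sq_mul.
have : <<A>> \subset Group gS.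
  rewrite gen_subG; apply/subsetP => x Ax; rewrite inE (subsetP sAG) //=; exact: HA.
by move=> /subsetP sub x /sub; rewrite inE => /andP[_ ->].
Qed.

Section Tree.
Variable k : nat.
Implicit Types x y z : leaf k.

Definition agr j (x y : leaf k) := forall m, m < j -> nth false x m = nth false y m.

Lemma take_agr j x y : take j x = take j y <-> agr j x y.
Proof.
split=> [E m lt_mj | A].
  by rewrite -(nth_take _ lt_mj) E nth_take.
apply: (@eq_from_nth _ false); first by rewrite !size_take !size_tuple.
move=> m; rewrite size_take size_tuple => lt.
have lt_mj : m < j.
  move: lt; case: ifP => // /negbT; rewrite -leqNgt => le_kj lt; exact: leq_trans lt le_kj.
by rewrite !nth_take // A.
Qed.

Lemma leaf_eq x y : agr k x y -> x = y.
Proof.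
move=> A; apply/val_inj; apply: (@eq_from_nth _ false); first by rewrite !size_tuple.
by move=> m; rewrite size_tuple => /A.
Qed.

Lemma agrS j x y : agr j.+1 x y <-> agr j x y /\ nth false x j = nth false y j.
Proof.
split=> [A | [A E] m].
  by split; [move=> m lt; apply: A; apply: ltnW | apply: A].
by rewrite ltnS leq_eqVlt => /orP[/eqP -> // | /A].
Qed.

Lemma agr_le i j x y : i <= j -> agr j x y -> agr i x y.
Proof. by move=> le A m lt; apply: A; apply: leq_trans le. Qed.

Lemma agr_trans j x y z : agr j x y -> agr j y z -> agr j x z.
Proof. by move=> A B m lt; rewrite A // B. Qed.

Lemma agr_sym j x y : agr j x y -> agr j y x.
Proof. by move=> A m lt; rewrite A. Qed.

Definition toggle (i : 'I_k) x : leaf k := [tuple ((j : nat) == i) (+) tnth x j | j < k].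

Lemma nth_toggle i x m : nth false (toggle i x) m = (m == i) (+) nth false x m.
Proof.
case: (ltnP m k) => [lt | le].
  by rewrite -[m]/(nat_of_ord (Ordinal lt)) nth_mktuple (tnth_nth false).
rewrite !nth_default ?size_tuple //.
by case: eqP => // E; move: (ltn_ord i); rewrite -E ltnNge le.
Qed.

Lemma toggleK i : involutive (toggle i).
Proof.
by move=> x; apply: leaf_eq => m _; rewrite !nth_toggle addbA addbb.
Qed.

Lemma agr_toggle (i : 'I_k) j x : j <= i -> agr j (toggle i x) x.
Proof.
move=> le m lt; rewrite nth_toggle; case: eqP => // E.
by move: lt; rewrite E ltnNge le.
Qed.

Definition flipf i (P : pred (leaf k)) x :=
  if P x && P (toggle i x) then toggle i x else x.

Lemma flipfK i P : involutive (flipf i P).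
Proof.
move=> x; rewrite /flipf.
case Px: (P x); case Ptx: (P (toggle i x)) => /=; rewrite ?toggleK ?Px ?Ptx //=.
Qed.

Definition flip i P : {perm leaf k} := perm (can_inj (flipfK i P)).

Lemma flipE i P x : flip i P x = flipf i P x.
Proof. by rewrite permE. Qed.

Lemma flipM i P : flip i P * flip i P = 1.
Proof. by apply/permP => x; rewrite permM !flipE flipfK perm1. Qed.

Lemma nth_flip i P x m : (forall y, P (toggle i y) = P y) ->
  nth false (flip i P x) m = ((m == i) && P x) (+) nth false x m.
Proof.
move=> HT; rewrite flipE /flipf HT andbb.
by case: (P x); rewrite ?nth_toggle //; case: (m == i).
Qed.

Definition PB (s : {perm leaf k}) :=
  forall j, j <= k -> forall x y, agr j x y <-> agr j (s x) (s y).

Lemma PB_Bk s : PB s -> s \in Bk k.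
Proof.
move=> Hs; rewrite inE; apply/forallP=> x; apply/forallP=> y; apply/forallP=> j.
have hj : j <= k := ltnSE (ltn_ord j).
apply/eqP; apply/idP/idP => /eqP/take_agr H; apply/eqP; apply (proj2 (take_agr _ _ _)).
  exact: (proj1 (Hs j hj x y) H).
exact: (proj2 (Hs j hj x y) H).
Qed.

Lemma Bk_PB s : s \in Bk k -> PB s.
Proof.
rewrite inE => /forallP H j hj x y.
have := forallP (H x) y => /forallP /(_ (Ordinal (hj : j < k.+1))) /eqP /= E.
split=> A.
  apply (proj1 (take_agr _ _ _)); apply/eqP; rewrite -E; apply/eqP.
  exact: (proj2 (take_agr _ _ _) A).
apply (proj1 (take_agr _ _ _)); apply/eqP; rewrite E; apply/eqP.
exact: (proj2 (take_agr _ _ _) A).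
Qed.

Lemma PB1 : PB 1.
Proof. by move=> j hj x y; rewrite !perm1. Qed.

Lemma PB_mul s t : PB s -> PB t -> PB (s * t).
Proof.
move=> Hs Ht j hj x y; rewrite !permM.
split=> H.
  apply (proj1 (Ht j hj _ _)); exact: (proj1 (Hs j hj _ _) H).
apply (proj2 (Hs j hj _ _)); exact: (proj2 (Ht j hj _ _) H).
Qed.

Lemma Bk_group_set : group_set (Bk k).
Proof.
apply/group_setP; split; first exact: PB_Bk PB1.
by move=> s t /Bk_PB Hs /Bk_PB Ht; apply: PB_Bk (PB_mul Hs Ht).
Qed.

Canonical Bk_group := Group Bk_group_set.

Lemma Gk_group_set : group_set (Gk k).
Proof. exact: (valP (setI_group Bk_group [group of 'Alt_(leaf k)])). Qed.

Canonical Gk_group := Group Gk_group_set.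

Definition Pg (g : {perm leaf k}) (j : nat) :=
  fun x : leaf k => nth false (g x) j != nth false x j.

Lemma Pg_HP g (j : 'I_k) : PB g -> (forall x, agr j (g x) x) ->
  forall x y, agr j x y -> Pg g j x = Pg g j y.
Proof.
move=> Hg Hfix x y A.
have hj1 : j.+1 <= k := ltn_ord j.
have Agj : agr j (g x) (g y) := agr_trans (Hfix x) (agr_trans A (agr_sym (Hfix y))).
rewrite /Pg; case: (boolP (nth false x j == nth false y j)) => [/eqP E | NE].
  have : agr j.+1 x y by apply (proj2 (agrS _ _ _)).
  by move/(proj1 (Hg _ hj1 x y)) => /agrS [_ ->]; rewrite E.
have NE' : nth false (g x) j != nth false (g y) j.
  apply/negP => /eqP E'.
  have : agr j.+1 (g x) (g y) by apply (proj2 (agrS _ _ _)).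
  by move/(proj2 (Hg _ hj1 x y)) => /agrS [_ E2]; rewrite E2 eqxx in NE.
move: NE NE'; case: (nth false x j); case: (nth false y j);
  case: (nth false (g x) j); case: (nth false (g y) j).
all: by [].
Qed.

Lemma HT_of_HP (j : 'I_k) (P : pred (leaf k)) : (forall x y, agr j x y -> P x = P y) ->
  forall y, P (toggle j y) = P y.
Proof. by move=> HP y; apply: HP; exact: agr_toggle. Qed.

Lemma agr_flip (i : 'I_k) Q x : (forall y, Q (toggle i y) = Q y) -> agr i (flip i Q x) x.
Proof.
move=> HT m lt; rewrite nth_flip // (_ : (m == i) = false) //.
by apply/negbTE; rewrite neq_ltn lt.
Qed.

Lemma PB_flip (j : 'I_k) (P : pred (leaf k)) : (forall x y, agr j x y -> P x = P y) -> PB (flip j P).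
Proof.
move=> HP; have HT := HT_of_HP HP.
have fwd : forall i x y, agr i x y -> agr i (flip j P x) (flip j P y).
  move=> i x y A m lt; rewrite !nth_flip // A //.
  case: eqP => // Em; rewrite (HP x y) //.
  by apply: agr_le A; rewrite -Em; exact: ltnW.
move=> i hi x y; split; first exact: fwd.
by move=> /(fwd i); rewrite !flipE !flipfK.
Qed.

Lemma step_fix g (j : 'I_k) : PB g -> (forall x, agr j (g x) x) ->
  forall x, agr j.+1 ((flip j (Pg g j) * g) x) x.
Proof.
move=> Hg Hfix x; rewrite permM.
have HP := Pg_HP Hg Hfix.
have HT := HT_of_HP HP.
set y := flip j (Pg g j) x.
have Ay : agr j y x by apply: agr_flip.
apply (proj2 (agrS _ _ _)); split; first exact: agr_trans (Hfix y) Ay.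
have E1 : nth false y j = Pg g j x (+) nth false x j by rewrite /y nth_flip // eqxx.
have E2 : Pg g j y = Pg g j x := HP _ _ Ay.
move: E2; rewrite {1}/Pg E1.
by case: (Pg g j x); case: (nth false (g y) j); case: (nth false x j).
Qed.

Lemma flip_even (j l : 'I_k) (P : pred (leaf k)) : j < l -> (forall x y, agr j x y -> P x = P y) ->
  ~~ odd_perm (flip j P).
Proof.
move=> jl HP.
pose P0 := fun x => P x && ~~ nth false x l.
pose P1 := fun x => P x && nth false x l.
pose c := flip l predT.
have lj : (l == j :> nat) = false by apply/negbTE; rewrite neq_ltn jl orbT.
have Tl : forall y, nth false (toggle j y) l = nth false y l.
  by move=> y; rewrite nth_toggle lj.
have HT := HT_of_HP HP.
have HT0 : forall y, P0 (toggle j y) = P0 y by move=> y; rewrite /P0 HT Tl.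
have HT1 : forall y, P1 (toggle j y) = P1 y by move=> y; rewrite /P1 HT Tl.
have HTc : forall y, predT (toggle l y) = predT y by [].
have E : flip j P = flip j P0 * flip j P1.
  apply/permP => x; rewrite permM; apply: leaf_eq => m _.
  rewrite !nth_flip // /P1 (HP _ x (agr_flip x HT0)) nth_flip // lj /P0 /=.
  by case: (m == j); case: (P x); case: (nth false x l).
have E1 : flip j P1 = flip j P0 ^ c.
  apply/permP => x.
  have [y ->] : exists y, x = c y by exists (c x); rewrite /c !flipE flipfK.
  rewrite permJ; apply: leaf_eq => m _.
  have Pcy : P (c y) = P y.
    by apply: HP; apply: agr_le (ltnW jl) (agr_flip y HTc).
  rewrite /c !nth_flip // -/c /P1 /P0 Pcy /c nth_flip // eqxx /=.
  by case: (m == j); case: (m == l); case: (P y); case: (nth false y l).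
by rewrite E E1 odd_permM odd_permJ addbb.
Qed.

Definition Hs := [set t in Gk k | t * t == 1].

Lemma Gk_Bk g : g \in Gk k -> PB g.
Proof. by rewrite /Gk inE => /andP[/Bk_PB]. Qed.

Lemma iter_step (l : 'I_k) : forall d j g, j + d = l -> PB g -> (forall x, agr j (g x) x) ->
  exists h g', [/\ h \in <<Hs>>, PB g', (forall x, agr l (g' x) x) & g = h * g'].
Proof.
elim=> [|d IH] j g jd Hg Hfix.
  exists 1, g; rewrite group1 mul1g; split=> //.
  by move: jd Hfix; rewrite addn0 => ->.
have jl : j < l by rewrite -jd addnS ltnS leq_addr.
have jk : j < k := ltn_trans jl (ltn_ord l).
pose J := Ordinal jk.
have HP := Pg_HP (j:=J) Hg Hfix.
pose f := flip J (Pg g J).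
have jd' : j.+1 + d = l by rewrite addSnnS.
have [h [g' [Hh Hg' Hfix' E]]] :=
  IH j.+1 (f * g) jd' (PB_mul (PB_flip HP) Hg) (step_fix (j:=J) Hg Hfix).
have PBf : PB f := PB_flip HP.
exists (f * h), g'; split => //.
  rewrite groupM // mem_gen // inE flipM eqxx andbT /Gk inE PB_Bk //=.
  by rewrite Alt_even (flip_even (l:=l)).
have -> : f * h * g' = f * (h * g') by rewrite mulgA.
by rewrite -E mulgA flipM mul1g.
Qed.

Lemma main_sec (l : 'I_k) : l.+1 = k ->
  forall g, g \in Gk k -> g ^+ 2 \in [~: Gk k, Gk k].
Proof.
move=> hl g Gg.
have Hg := Gk_Bk Gg.
have A0 : forall x, agr 0 (g x) x by move=> x m.
have [h [g' [Hh Hg' Hfix E]]] := @iter_step l l 0 g (add0n _) Hg A0.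
have HP := Pg_HP Hg' Hfix.
pose f := flip l (Pg g' l).
have g'1 : f * g' = 1.
  apply/permP => x; rewrite perm1; apply/leaf_eq; have := step_fix Hg' Hfix x; by rewrite hl.
have Eg' : g' = f.
  have : f * (f * g') = f by rewrite g'1 mulg1.
  by rewrite mulgA flipM mul1g.
have Hsub : Hs \subset Gk k by apply/subsetP => t; rewrite inE => /andP[].
have Hsub' : <<Hs>> \subset Gk k by rewrite gen_subG.
have g'G : g' \in Gk k.
  have -> : g' = h^-1 * g by rewrite E mulKg.
  by rewrite groupM ?groupV // (subsetP Hsub').
have g'H : g' \in Hs by rewrite inE g'G /= {1}Eg' g'1 eqxx.
have gH : g \in <<Hs>> by rewrite E groupM // mem_gen.
apply: (gen_sq Hsub) gH => t; rewrite inE => /andP[_ /eqP tt].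
by rewrite expgS expg1 tt group1.
Qed.

End Tree.

Theorem proposition15 (k : nat) : 1 <= k ->
  forall g : {perm leaf k}, g \in Gk k -> (g ^+ 2)%g \in ([~: Gk k, Gk k])%g.
Proof.
case: k => // n _; exact: (@main_sec n.+1 ord_max).
Qed.
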